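(* Let $L$ be a pretransitive logic. Then for all formulas $\varphi,\psi$: $$L[1]\vdash\Box^*\psi\to\Box^*\varphi\quad\text{iff}\quad L\vdash\Diamond^*\Box^*\psi\to\Diamond^*\Box^*\varphi.$$
   Context: Logics are normal $n$-modal logics. $\Diamond^0\varphi=\varphi$, $\Diamond^{i+1}\varphi=\Diamond^i(\bigvee_{j<n}\Diamond_j\varphi)$, $\Diamond^{\le m}\varphi=\bigvee_{i\le m}\Diamond^i\varphi$. $L$ is pretransitive if $L\vdash\Diamond^{m+1}p\to\Diamond^{\le m}p$ for some $m$; for the least such $m$ (for $L$), $\Diamond^*=\Diamond^{\le m}$ and $\Box^*=\neg\Diamond^*\neg$; these same abbreviations are used in $L[1]$. $B_1=p_1\to\Box^*(\Diamond^*p_1\vee\bot)$, and $L[1]$ is the smallest logic containing $L\cup\{B_1\}$. *)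

(* Defs.v *)
From mathcomp Require Import all_boot.
Set Implicit Arguments. Unset Strict Implicit. Unset Printing Implicit Defensive.

Inductive form (n : nat) : Type :=
| Var : nat -> form n
| Bot : form n
| Imp : form n -> form n -> form n
| Box : 'I_n -> form n -> form n.
Arguments Bot {n}.

Definition Neg n (a : form n) : form n := Imp a Bot.
Definition Or n (a b : form n) : form n := Imp (Neg a) b.
Definition Dia n (i : 'I_n) (a : form n) : form n := Neg (Box i (Neg a)).

Fixpoint bigOr n (l : seq (form n)) : form n :=
  match l with
  | [::] => Bot
  | [:: a] => a
  | a :: l' => Or a (bigOr l')
  end.

Fixpoint subst n (s : nat -> form n) (a : form n) : form n :=
  match a with
  | Var k => s k
  | Bot => Bot
  | Imp a b => Imp (subst s a) (subst s b)
  | Box i a => Box i (subst s a)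
  end.

Inductive deriv n (G : form n -> Prop) : form n -> Prop :=
| d_hyp a : G a -> deriv G a
| d_A1 a b : deriv G (Imp a (Imp b a))
| d_A2 a b c : deriv G (Imp (Imp a (Imp b c)) (Imp (Imp a b) (Imp a c)))
| d_A3 a : deriv G (Imp (Neg (Neg a)) a)
| d_K (i : 'I_n) a b :
    deriv G (Imp (Box i (Imp a b)) (Imp (Box i a) (Box i b)))
| d_MP a b : deriv G (Imp a b) -> deriv G a -> deriv G b
| d_Nec (i : 'I_n) a : deriv G a -> deriv G (Box i a)
| d_Sub (s : nat -> form n) a : deriv G a -> deriv G (subst s a).

Definition normal_logic n (L : form n -> Prop) : Prop :=
  forall a, deriv L a -> L a.

Definition dia1 n (a : form n) : form n := bigOr [seq Dia j a | j <- enum 'I_n].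
Fixpoint diaIt n (i : nat) (a : form n) : form n :=
  match i with
  | 0 => a
  | i'.+1 => diaIt i' (dia1 a)
  end.
Definition diaLe n (m : nat) (a : form n) : form n :=
  bigOr [seq diaIt i a | i <- iota 0 m.+1].
Definition boxLe n (m : nat) (a : form n) : form n := Neg (diaLe m (Neg a)).

Definition pretrans_at n (L : form n -> Prop) (m : nat) : Prop :=
  L (Imp (diaIt m.+1 (Var n 0)) (diaLe m (Var n 0))).

(* m is the least pretransitivity index of L (so Dia* = Dia^{<= m}). *)
Definition least_pretrans n (L : form n -> Prop) (m : nat) : Prop :=
  pretrans_at L m /\ forall k, k < m -> ~ pretrans_at L k.

Definition B1 (n m : nat) : form n :=
  Imp (Var n 1) (boxLe m (Or (diaLe m (Var n 1)) Bot)).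

Definition L1_prov n (L : form n -> Prop) (m : nat) (a : form n) : Prop :=
  deriv (fun b => L b \/ b = @B1 n m) a.

(* Main.v *)
Require Import Defs.
From mathcomp Require Import all_boot zify.
Set Implicit Arguments. Unset Strict Implicit. Unset Printing Implicit Defensive.


Inductive pf := PV of nat | PB | PI of pf & pf.
Fixpoint pev (v : nat -> bool) p := match p with PV i => v i | PB => false | PI a b => pev v a ==> pev v b end.
Fixpoint maxv p := match p with PV i => i | PB => 0 | PI a b => maxn (maxv a) (maxv b) end.
Definition upd (v : nat -> bool) k b := fun i => if i == k then b else v i.
Fixpoint chk (k : nat) (v : nat -> bool) (p : pf) : bool :=
  match k with 0 => pev v p | k'.+1 => chk k' (upd v k' true) p && chk k' (upd v k' false) p end.
Definition ptaut p := chk (maxv p).+1 (fun _ => false) p.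

Lemma pev_loc p w w' : (forall i, i <= maxv p -> w i = w' i) -> pev w p = pev w' p.
Proof.
elim: p => [i|//|a IHa b IHb] /= H; first by apply: H.
rewrite IHa ?IHb // => i Hi; apply: H.
- by rewrite (leq_trans Hi) // leq_maxr.
- by rewrite (leq_trans Hi) // leq_maxl.
Qed.

Lemma chk_sound k v p : chk k v p -> forall w, (forall i, k <= i -> w i = v i) -> pev w p.
Proof.
elim: k v => [|k IH] v /=.
  by move=> H w Hw; rewrite (@pev_loc p w v) // => i _; apply: Hw.
case/andP=> H1 H2 w Hw.
have Hw' : forall i, k <= i -> w i = upd v k (w k) i.
  move=> i Hi; rewrite /upd; case: eqP => [->//|ne]; apply: Hw.
  by rewrite ltn_neqAle Hi andbT eq_sym; apply/eqP.
case E: (w k) Hw'=> Hw'; [exact: IH H1 w Hw' | exact: IH H2 w Hw'].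
Qed.

Lemma ptaut_sound p : ptaut p -> forall w, pev w p.
Proof.
move=> H w.
rewrite (@pev_loc p w (fun i => if i <= maxv p then w i else false)); last by move=> i ->.
apply: (chk_sound H) => i Hi; case: ifP => //; rewrite leqNgt Hi. done.
Qed.

Fixpoint inL (A : Type) (x : A) (l : seq A) : Prop :=
  match l with [::] => False | y :: l' => y = x \/ inL x l' end.

Lemma inL_map (A B : Type) (f : A -> B) x l : inL x l -> inL (f x) (map f l).
Proof. elim: l => [//|y l IH] /= [->|H]; [by left | right; exact: IH]. Qed.
Lemma inL_map_inv (A B : Type) (f : A -> B) y l : inL y (map f l) -> exists x, inL x l /\ y = f x.
Proof.
elim: l => [//|x l IH] /= [<-|H]; first by exists x; split=> //; left.
by case: (IH H) => z [Hz ->]; exists z; split=> //; right.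
Qed.
Lemma inL_mem (T : eqType) (x : T) l : inL x l <-> x \in l.
Proof.
elim: l => [//|y l IH] /=; rewrite in_cons; split.
- by case=> [->|/IH ->]; rewrite ?eqxx ?orbT.
- by case/orP=> [/eqP ->|/IH H]; [left | right].
Qed.
Lemma inL_iota m k i : m <= i < m + k -> inL i (iota m k).
Proof. by move=> H; apply/inL_mem; rewrite mem_iota. Qed.

Section Prop_engine.
Variables (n : nat) (L : form n -> Prop).
Hypothesis HL : normal_logic L.

Fixpoint pint (e : nat -> form n) p := match p with PV i => e i | PB => Bot | PI a b => Imp (pint e a) (pint e b) end.

Lemma Lmp a b : L (Imp a b) -> L a -> L b.
Proof. move=> H1 H2; apply: HL; apply: d_MP; apply: d_hyp; eassumption. Qed.
Lemma Lmp' a b : L a -> L (Imp a b) -> L b.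
Proof. by move=> H1 H2; apply: Lmp H2 H1. Qed.
Lemma LA1 a b : L (Imp a (Imp b a)). Proof. by apply: HL; apply: d_A1. Qed.
Lemma LA2 a b c : L (Imp (Imp a (Imp b c)) (Imp (Imp a b) (Imp a c))). Proof. by apply: HL; apply: d_A2. Qed.
Lemma LA3 a : L (Imp (Neg (Neg a)) a). Proof. by apply: HL; apply: d_A3. Qed.
Lemma Lid a : L (Imp a a).
Proof. exact: Lmp (Lmp (LA2 a (Imp a a) a) (LA1 _ _)) (LA1 a a). Qed.
Lemma Lweak g x : L x -> L (Imp g x). Proof. exact: Lmp (LA1 _ _). Qed.
Lemma Lsyl P Q R : L (Imp P Q) -> L (Imp Q R) -> L (Imp P R).
Proof. move=> H1 H2; exact: Lmp (Lmp (LA2 _ _ _) (Lweak P H2)) H1. Qed.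
Lemma Llift g X1 X2 X3 : L (Imp X1 (Imp X2 X3)) ->
  L (Imp (Imp g X1) (Imp (Imp g X2) (Imp g X3))).
Proof.
move=> H; have H1 := Lmp (LA2 g X1 (Imp X2 X3)) (Lweak g H).
exact: Lsyl H1 (LA2 _ _ _).
Qed.

Definition imps (G : seq (form n)) a := foldr (@Imp n) a G.
Lemma ctx_mp_thm G a b : L (Imp (imps G (Imp a b)) (Imp (imps G a) (imps G b))).
Proof. elim: G => [|g G IH] /=; [exact: Lid | exact: Llift]. Qed.
Lemma ctx_mp G a b : L (imps G (Imp a b)) -> L (imps G a) -> L (imps G b).
Proof. move=> H1 H2; exact: Lmp (Lmp (ctx_mp_thm G a b) H1) H2. Qed.
Lemma ctx_weak G x : L x -> L (imps G x).
Proof. elim: G => [|g G IH] //= H; exact: Lweak (IH H). Qed.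
Lemma ctx_self g G : L (Imp g (imps G g)).
Proof. elim: G => [|h G IH] /=; [exact: Lid | exact: Lsyl IH (LA1 _ _)]. Qed.
Lemma ctx_hyp G x : inL x G -> L (imps G x).
Proof.
elim: G => [|g G IH] //= [<-|H]; [exact: ctx_self | exact: Lweak (IH H)].
Qed.
Lemma imps_rcons G h a : imps (rcons G h) a = imps G (Imp h a).
Proof. by rewrite /imps foldr_rcons. Qed.

Lemma Lefq a : L (Imp Bot a). Proof. exact: Lsyl (LA1 Bot (Neg a)) (LA3 a). Qed.
Lemma t1 a b : L (Imp (Neg a) (Imp a b)).
Proof.
have H : L (imps [:: Neg a; a] b).
  apply: ctx_mp (ctx_weak _ (Lefq b)) _.
  apply: (ctx_mp (a := a) (ctx_hyp (G := [:: Neg a; a]) (x := Neg a) _) (ctx_hyp _)); simpl; auto.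
exact: H.
Qed.
Lemma t2 a b : L (Imp a (Imp (Neg b) (Neg (Imp a b)))).
Proof.
have H : L (imps [:: a; Neg b; Imp a b] Bot).
  apply: ctx_mp (ctx_hyp (G := [:: a; Neg b; Imp a b]) (x := Neg b) _) _; first by simpl; auto.
  by apply: ctx_mp (ctx_hyp (x := Imp a b) _) (ctx_hyp _); simpl; auto.
exact: H.
Qed.
Lemma t3 x p : L (Imp (Imp x p) (Imp (Imp (Neg x) p) p)).
Proof.
have H : L (imps [:: Imp x p; Imp (Neg x) p; Neg p] Bot).
  set G := [:: Imp x p; Imp (Neg x) p; Neg p].
  have Hnx : L (imps G (Neg x)).
    have H' : L (imps (rcons G x) Bot).
      apply: ctx_mp (ctx_hyp (x := Neg p) _) _; first by simpl; auto.
      by apply: ctx_mp (ctx_hyp (x := Imp x p) _) (ctx_hyp _); simpl; auto.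
    by rewrite imps_rcons in H'.
  apply: ctx_mp (ctx_hyp (x := Neg p) _) _; first by simpl; auto.
  by apply: ctx_mp (ctx_hyp (x := Imp (Neg x) p) _) Hnx; simpl; auto.
have H2 : L (imps [:: Imp x p; Imp (Neg x) p] p).
  apply: ctx_mp (ctx_weak _ (LA3 p)) _; exact: H.
exact: H2.
Qed.

Section Kalmar.
Variable e : nat -> form n.
Definition lit i (b : bool) := if b then e i else Neg (e i).
Definition lits (w : nat -> bool) k := [seq lit i (w i) | i <- iota 0 k].

Lemma In_lits w k i : i < k -> inL (lit i (w i)) (lits w k).
Proof. by move=> Hi; apply: (inL_map (fun i => lit i (w i))); apply: inL_iota. Qed.

Lemma lits_S w k : lits w k.+1 = rcons (lits w k) (lit k (w k)).
Proof. by rewrite /lits -addn1 iotaD map_cat cats1. Qed.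

Lemma lits_upd w k b : lits (upd w k b) k = lits w k.
Proof.
apply/eq_in_map => i; rewrite mem_iota add0n /= /upd => Hi.
by rewrite ifF // ltn_eqF.
Qed.

Lemma kalmar p w k : maxv p < k ->
  L (imps (lits w k) (if pev w p then pint e p else Neg (pint e p))).
Proof.
elim: p => [i|//|a IHa b IHb] /= Hk.
- by apply: ctx_hyp; apply: In_lits.
- exact: ctx_weak (Lid _).
have Ha : maxv a < k by rewrite (leq_ltn_trans _ Hk) // leq_maxl.
have Hb : maxv b < k by rewrite (leq_ltn_trans _ Hk) // leq_maxr.
move: (IHa Ha) (IHb Hb).
case: (pev w a); case: (pev w b) => /= H1 H2.
- exact: ctx_mp (ctx_weak _ (LA1 _ _)) H2.
- exact: ctx_mp (ctx_mp (ctx_weak _ (t2 _ _)) H1) H2.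
- exact: ctx_mp (ctx_weak _ (LA1 _ _)) H2.
- exact: ctx_mp (ctx_weak _ (t1 _ _)) H1.
Qed.

Lemma elim_step q k : (forall w, L (imps (lits w k.+1) q)) -> forall w, L (imps (lits w k) q).
Proof.
move=> H w.
have H1 := H (upd w k true); have H2 := H (upd w k false).
rewrite lits_S lits_upd imps_rcons /lit /upd eqxx in H1.
rewrite lits_S lits_upd imps_rcons /lit /upd eqxx in H2.
exact: ctx_mp (ctx_mp (ctx_weak _ (t3 _ _)) H1) H2.
Qed.

Lemma elim_all q j : forall k, (forall w, L (imps (lits w (k + j)) q)) -> forall w, L (imps (lits w k) q).
Proof.
elim: j => [|j IH] k; first by rewrite addn0.
move=> H; apply: elim_step; apply: IH; by rewrite addSnnS.
Qed.
End Kalmar.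

Lemma taut_L p e : ptaut p = true -> L (pint e p).
Proof.
move=> Ht.
have H : forall w, L (imps (lits e w (0 + (maxv p).+1)) (pint e p)).
  move=> w; have := @kalmar e p w _ (ltnSn (maxv p)).
  by rewrite (ptaut_sound Ht w).
exact: (@elim_all e _ _ 0 H (fun _ => false)).
Qed.

End Prop_engine.


Ltac idx x l := lazymatch l with | cons x _ => constr:(0) | cons _ ?l' => let k := idx x l' in constr:(S k) end.
Ltac addA x l := match constr:(tt) with | _ => let k := idx x l in l | _ => constr:(cons x l) end.
Ltac collect t l := lazymatch t with
 | @Bot _ => l
 | Imp ?a ?b => let l := collect a l in collect b l
 | Neg ?a => collect a l
 | Or ?a ?b => let l := collect a l in collect b l
 | Dia ?i ?a => addA (Box i (Neg a)) l
 | boxLe ?m ?a => addA (diaLe m (Neg a)) l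
 | _ => addA t l
 end.
Ltac reify t l := lazymatch t with
 | @Bot _ => constr:(PB)
 | Imp ?a ?b => let ra := reify a l in let rb := reify b l in constr:(PI ra rb)
 | Neg ?a => let ra := reify a l in constr:(PI ra PB)
 | Or ?a ?b => let ra := reify a l in let rb := reify b l in constr:(PI (PI ra PB) rb)
 | Dia ?i ?a => let k := idx (Box i (Neg a)) l in constr:(PI (PV k) PB)
 | boxLe ?m ?a => let k := idx (diaLe m (Neg a)) l in constr:(PI (PV k) PB)
 | _ => let k := idx t l in constr:(PV k)
 end.
Ltac ptauto HL := lazymatch goal with |- _ ?t =>
  let T := type of t in
  let l := collect t constr:(@nil T) in
  let p := reify t l in
  refine (@taut_L _ _ HL p (fun i => nth Bot l i) _); vm_compute; reflexivity end.

Notation And a b := (Neg (Imp a (Neg b))).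

Section T.
Variables (n : nat) (L : form n -> Prop).
Hypothesis HL : normal_logic L.
Goal forall (a b : form n) m, L (Imp (And a (boxLe m b)) (Or (Neg (Neg (Neg (diaLe m (Neg b))))) a)).
move=> a b m. ptauto HL. Qed.
End T.


Section Syn.
Variable n : nat.
Implicit Types (s : nat -> form n) (a : form n).
Lemma subst_bigOr s l : subst s (bigOr l) = bigOr (map (subst s) l).
Proof. elim: l => [|a l IH] //=; case: l IH => [|b l] IH //=; by rewrite IH. Qed.
Lemma subst_dia1 s a : subst s (dia1 a) = dia1 (subst s a).
Proof. by rewrite /dia1 subst_bigOr -map_comp. Qed.
Lemma subst_diaIt s i a : subst s (diaIt i a) = diaIt i (subst s a).
Proof. by elim: i a => [|i IH] a //=; rewrite IH subst_dia1. Qed.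
Lemma subst_diaLe s m a : subst s (diaLe m a) = diaLe m (subst s a).
Proof.
rewrite /diaLe subst_bigOr -map_comp; congr bigOr; apply: eq_map => i /=.
exact: subst_diaIt.
Qed.
Lemma subst_boxLe s m a : subst s (boxLe m a) = boxLe m (subst s a).
Proof. by rewrite /boxLe /Neg /= subst_diaLe. Qed.
Lemma subst_comp s t a : subst s (subst t a) = subst (fun k => subst s (t k)) a.
Proof. by elim: a => //= [a IHa b IHb|i a IH]; rewrite ?IHa ?IHb ?IH. Qed.
Lemma subst_id a : subst (@Var n) a = a.
Proof. by elim: a => //= [a IHa b IHb|i a IH]; rewrite ?IHa ?IHb ?IH. Qed.
Lemma diaIt_add i j a : diaIt i (diaIt j a) = diaIt (j + i) a.
Proof. by elim: j a => [|j IH] a //=; rewrite IH. Qed.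
End Syn.


Section Modal.
Variables (n : nat) (L : form n -> Prop).
Hypothesis HL : normal_logic L.
Ltac pt := ptauto HL.
Ltac use H := apply: (Lmp' HL H).

Lemma Lnec i a : L a -> L (Box i a).
Proof. by move=> H; apply: HL; apply: d_Nec; apply: d_hyp. Qed.
Lemma LK i a b : L (Imp (Box i (Imp a b)) (Imp (Box i a) (Box i b))).
Proof. by apply: HL; apply: d_K. Qed.
Lemma Lsub s a : L a -> L (subst s a).
Proof. by move=> H; apply: HL; apply: d_Sub; apply: d_hyp. Qed.
Lemma box_mono i a b : L (Imp a b) -> L (Imp (Box i a) (Box i b)).
Proof. move=> H. have X := LK i a b. have Y := Lnec i H. exact: (Lmp HL X Y). Qed.

Record good (f : form n -> form n) : Prop := Good {
 g_mono : forall a b, L (Imp a b) -> L (Imp (f a) (f b));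
 g_kd : forall a c, L (Imp (f a) (Imp (Neg (f (Neg c))) (f (And a c))));
 g_bot : L (Imp (f Bot) Bot) }.

Lemma good_dia i : good (Dia i).
Proof.
split.
- move=> a b H.
  have H1 : L (Imp (Neg b) (Neg a)) by use H; pt.
  have H2 := box_mono i H1. use H2; pt.
- move=> a c.
  have T : L (Imp (Neg (Neg c)) (Imp (Neg (And a c)) (Neg a))) by pt.
  have H1 := Lmp HL (LK i _ _) (Lnec i T).
  have H2 := LK i (Neg (And a c)) (Neg a).
  use H1; use H2; pt.
- have H : L (Box i (Neg Bot)) by apply: Lnec; pt.
  use H; pt.
Qed.

Lemma good_comp f g : good f -> good g -> good (fun a => f (g a)).
Proof.
move=> [fm fk fb] [gm gk gb]; split.
- by move=> a b H; apply: fm; apply: gm.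
- move=> a c.
  have h1 : L (Imp (f (Neg (Neg (g (Neg c))))) (f (g (Neg c)))) by apply: fm; pt.
  have h2 := fk (g a) (Neg (g (Neg c))).
  have h3 : L (Imp (f (And (g a) (Neg (g (Neg c))))) (f (g (And a c)))).
    apply: fm; have := gk a c => H; use H; pt.
  use h1; use h2; use h3; pt.
- have h := fm _ _ gb. use h; use fb; pt.
Qed.

Lemma good_id : good (fun a => a).
Proof. split=> [a b H|a c|]; by [ | pt | pt]. Qed.

Lemma bigOr_intro x l : inL x l -> L (Imp x (bigOr l)).
Proof.
elim: l => [|a l IH] //; case: l IH => [|b l] IH [<-|H] //.
- exact: Lid.
- change (L (Imp a (Or a (bigOr (b :: l))))); pt.
- have H1 := IH H. change (L (Imp x (Or a (bigOr (b :: l))))). use H1; pt.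
Qed.

Lemma bigOr_elim l y : (forall x, inL x l -> L (Imp x y)) -> L (Imp (bigOr l) y).
Proof.
elim: l => [|a l IH] /= H; first by pt.
case: l IH H => [|b l] IH H; first by apply: H; left.
have H1 : L (Imp a y) by apply: H; left.
have H2 : L (Imp (bigOr (b :: l)) y) by apply: IH => x Hx; apply: H; right.
change (L (Imp (Or a (bigOr (b :: l))) y)). use H1; use H2; pt.
Qed.

Lemma good_bigOr (I : Type) (l : seq I) (g : I -> form n -> form n) :
  (forall j, good (g j)) -> good (fun a => bigOr (map (fun j => g j a) l)).
Proof.
move=> Hg; split.
- move=> a b H; apply: bigOr_elim => x Hx; case: (inL_map_inv Hx) => j [Hj ->].
  have H1 := g_mono (Hg j) H.
  have H2 := bigOr_intro (inL_map (fun j => g j b) Hj).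
  exact: (Lsyl HL H1 H2).
- move=> a c; apply: bigOr_elim => x Hx; case: (inL_map_inv Hx) => j [Hj ->].
  have H1 := g_kd (Hg j) a c.
  have H2 := bigOr_intro (inL_map (fun j => g j (Neg c)) Hj).
  have H3 := bigOr_intro (inL_map (fun j => g j (And a c)) Hj).
  use H1; use H2; use H3; pt.
- apply: bigOr_elim => x Hx; case: (inL_map_inv Hx) => j [Hj ->]; exact: g_bot (Hg j).
Qed.

Lemma g_or f a b : good f -> L (Imp (f (Or a b)) (Or (f a) (f b))).
Proof.
move=> [fm fk fb].
have h1 := fk (Or a b) (Neg a).
have h2 : L (Imp (f (And (Or a b) (Neg a))) (f b)) by apply: fm; pt.
have h3 : L (Imp (f (Neg (Neg a))) (f a)) by apply: fm; pt.
use h1; use h2; use h3; pt.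
Qed.

Lemma g_bigOr f l : good f -> L (Imp (f (bigOr l)) (bigOr (map f l))).
Proof.
move=> Hf; elim: l => [|a l IH] /=; first exact: g_bot Hf.
case: l IH => [|b l] IH; first exact: Lid.
have h1 := g_or a (bigOr (b :: l)) Hf.
change (L (Imp (f (Or a (bigOr (b :: l)))) (Or (f a) (bigOr (map f (b :: l)))))).
use h1; use IH; pt.
Qed.

Lemma good_dia1 : good (@dia1 n).
Proof. exact (@good_bigOr _ (enum 'I_n) (fun j => Dia j) good_dia). Qed.
Lemma good_diaIt k : good (diaIt k).
Proof.
elim: k => [|k IH]; first exact: good_id.
exact (good_comp IH good_dia1).
Qed.
Lemma good_diaLe m : good (diaLe m).
Proof. exact (@good_bigOr _ (iota 0 m.+1) (fun i => diaIt i) good_diaIt). Qed.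

End Modal.


Section Main.
Variables (n : nat) (L : form n -> Prop).
Hypothesis HL : normal_logic L.
Variable m : nat.
Ltac pt := repeat match goal with x := _ |- _ => subst x end; ptauto HL.
Ltac use H := apply: (Lmp' HL H).
Notation D := (diaLe m).
Notation B := (boxLe m).

Lemma Dm a b : L (Imp a b) -> L (Imp (D a) (D b)).
Proof. exact: (g_mono (good_diaLe HL m)). Qed.
Lemma Dk a c : L (Imp (D a) (Imp (Neg (D (Neg c))) (D (And a c)))).
Proof. exact: (g_kd (good_diaLe HL m)). Qed.
Lemma Db : L (Imp (D Bot) Bot).
Proof. exact: (g_bot (good_diaLe HL m)). Qed.

Lemma D_intro k a : k <= m -> L (Imp (diaIt k a) (D a)).
Proof.
move=> Hk; have Hk' : 0 <= k < 0 + m.+1 by rewrite add0n ltnS.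
exact (bigOr_intro HL (inL_map (fun i => diaIt i a) (inL_iota Hk'))).
Qed.

Hypothesis Hpt : pretrans_at L m.

Lemma pt_inst a : L (Imp (diaIt m.+1 a) (D a)).
Proof.
have H := Lsub HL (fun _ => a) Hpt.
move: H; rewrite (_ : subst _ (Imp _ _) = Imp (subst (fun _ => a) (diaIt m.+1 (Var n 0))) (subst (fun _ => a) (diaLe m (Var n 0)))) //.
by rewrite subst_diaIt subst_diaLe.
Qed.

Lemma D_all k a : L (Imp (diaIt k a) (D a)).
Proof.
elim/ltn_ind: k a => k IH a.
case: (leqP k m) => Hk; first exact: D_intro.
set j := k - m.+1.
have -> : diaIt k a = diaIt j (diaIt m.+1 a) by rewrite diaIt_add subnKC.
have h1 := g_mono (good_diaIt HL j) (pt_inst a).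
have h2 := g_bigOr HL (map (fun i => diaIt i a) (iota 0 m.+1)) (good_diaIt HL j).
apply: (Lsyl HL h1); apply: (Lsyl HL h2).
apply: (bigOr_elim HL) => x Hx.
case: (inL_map_inv Hx) => y [Hy ->]; case: (inL_map_inv Hy) => i [Hi ->].
rewrite diaIt_add; apply: IH.
move/inL_mem: Hi; rewrite mem_iota add0n ltnS => /andP [_ Him]; rewrite /j; lia.
Qed.

Lemma D_diaIt_D i a : L (Imp (diaIt i (D a)) (D a)).
Proof.
have h2 := g_bigOr HL (map (fun i => diaIt i a) (iota 0 m.+1)) (good_diaIt HL i).
apply: (Lsyl HL h2).
apply: (bigOr_elim HL) => x Hx.
case: (inL_map_inv Hx) => y [Hy ->]; case: (inL_map_inv Hy) => j [Hj ->].
rewrite diaIt_add; exact: D_all.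
Qed.

Lemma D_4 a : L (Imp (D (D a)) (D a)).
Proof.
change (L (Imp (bigOr (map (fun i => diaIt i (D a)) (iota 0 m.+1))) (D a))).
apply: (bigOr_elim HL) => x Hx; case: (inL_map_inv Hx) => i [_ ->]; exact: D_diaIt_D.
Qed.

Lemma D_T a : L (Imp a (D a)).
Proof. exact (@D_intro 0 a (leq0n m)). Qed.

Lemma D_dia i a : L (Imp (Dia i a) (D a)).
Proof.
have Hi : inL i (enum 'I_n) by apply/inL_mem; rewrite mem_enum.
have h1 := bigOr_intro HL (inL_map (fun j => Dia j a) Hi).
have h2 := D_all 1 a.
exact (Lsyl HL h1 h2).
Qed.

Lemma B_mono a b : L (Imp a b) -> L (Imp (B a) (B b)).
Proof. move=> H. have h : L (Imp (Neg b) (Neg a)) by use H; pt. have h2 := Dm h. use h2; pt. Qed.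
Lemma B_T a : L (Imp (B a) a).
Proof. have h := D_T (Neg a). use h; pt. Qed.
Lemma B_4 a : L (Imp (B a) (B (B a))).
Proof.
have h0 : L (Imp (Neg (B a)) (D (Neg a))) by pt.
have h1 := Dm h0. have h2 := D_4 (Neg a). use h1; use h2; pt.
Qed.
Lemma B_and a b : L (Imp (B a) (Imp (B b) (B (And a b)))).
Proof.
have h1 := Dk (Neg (And a b)) b.
have h0 : L (Imp (And (Neg (And a b)) b) (Neg a)) by pt.
have h2 := Dm h0. use h1; use h2; pt.
Qed.
Lemma B_nec a : L a -> L (B a).
Proof.
move=> H. have h0 : L (Imp (Neg a) Bot) by use H; pt.
have h1 := Dm h0. use h1; use Db; pt.
Qed.
Lemma B_box i a : L (Imp (B a) (Box i a)).
Proof.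
have h1 := D_dia i (Neg a).
have h0 : L (Imp (Neg (Neg a)) a) by pt.
have h2 := box_mono HL i h0. use h1; use h2; pt.
Qed.


Lemma BD a c : L (Imp (B c) (Imp (D a) (D (And a c)))).
Proof. have h := Dk a c. use h; pt. Qed.

Definition Pinv (x : form n) := forall s r, L (Imp (D (B r)) (D (B (And r (subst s x))))).

Lemma P_L x : L x -> Pinv x.
Proof.
move=> H s r; have Hx := B_nec (Lsub HL s H).
have h := B_and r (subst s x).
have h2 : L (Imp (B r) (B (And r (subst s x)))) by use Hx; use h; pt.
exact (Dm h2).
Qed.

Lemma P_mp a b : Pinv (Imp a b) -> Pinv a -> Pinv b.
Proof.
move=> Hab Ha s r.
have h1 := Ha s r.
have h2 : L (Imp (D (B (And r (subst s a)))) (D (B (And (And r (subst s a)) (Imp (subst s a) (subst s b)))))) := Hab s _.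
have h0 : L (Imp (And (And r (subst s a)) (Imp (subst s a) (subst s b))) (And r (subst s b))) by pt.
have h3 := Dm (B_mono h0).
exact: (Lsyl HL h1 (Lsyl HL h2 h3)).
Qed.

Lemma P_nec i a : Pinv a -> Pinv (Box i a).
Proof.
move=> Ha s r.
have h1 := Ha s r.
set x := subst s a.
suff h : L (Imp (B (And r x)) (B (And r (Box i x)))) by exact: (Lsyl HL h1 (Dm h)).
have k1 : L (Imp (And r x) r) by pt.
have k2 : L (Imp (And r x) x) by pt.
have j1 := B_mono k1. have j2 := B_mono k2.
have j3 := B_mono (B_box i x).
have j4 := B_and r (Box i x).
use j1; use j2; use j3; use j4; use (B_4 x); pt.
Qed.

Lemma P_sub t a : Pinv a -> Pinv (subst t a).
Proof. by move=> Ha s r; rewrite subst_comp; apply: Ha. Qed.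

Lemma P_B1 : Pinv (B1 n m).
Proof.
move=> s r.
have -> : subst s (B1 n m) = Imp (s 1) (B (Or (D (s 1)) Bot)).
  change (Imp (s 1) (subst s (boxLe m (Or (diaLe m (Var n 1)) Bot))) = Imp (s 1) (B (Or (D (s 1)) Bot))).
  rewrite subst_boxLe (_ : subst s (Or _ _) = Or (subst s (diaLe m (Var n 1))) Bot) //.
  by rewrite subst_diaLe.
set th := s 1.
set chi := Imp th (B (Or (D th) Bot)).
set E := And (B r) (B (Neg th)).
have hA : L (Imp E (B (And r chi))).
  have k : L (Imp (Neg th) chi) by pt.
  have j1 := B_mono k. have j2 := B_and r chi. use j1; use j2; pt.
have hA' := Dm hA.
have hB : L (Imp (And (B r) (B (Neg E))) (B (And r chi))).
  have h1 := B_4 r.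
  have h2 := B_and (B r) (Neg E).
  have hdn : L (Imp (D (Neg (Neg th))) (D th)) by apply: Dm; pt.
  have h3' : L (Imp (And (B r) (Neg E)) (D th)) by use hdn; pt.
  have h3 := B_mono h3'.
  have h4 := B_4 (D th).
  have k5 : L (Imp (D th) (Or (D th) Bot)) by pt.
  have h5 := B_mono (B_mono k5).
  have k6 : L (Imp (B (Or (D th) Bot)) chi) by pt.
  have h6 := B_mono k6.
  have h7 := B_and r chi.
  use h1; use h2; use h3; use h4; use h5; use h6; use h7; pt.
have hB' := Dm hB.
have hC := Dk (B r) (B (Neg E)).
have hC2 := B_4 (Neg E).
have k : L (Imp (Neg (Neg E)) E) by pt.
have hC3 := Dm k.
use hA'; use hB'; use hC; use hC2; use hC3; pt.
Qed.

Lemma L1_inv x : deriv (fun b => L b \/ b = B1 n m) x -> Pinv x.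
Proof.
elim=> {x}.
- by move=> a [H|->]; [apply: P_L | apply: P_B1].
- by move=> a b; apply: P_L; apply: HL; apply: d_A1.
- by move=> a b c; apply: P_L; apply: HL; apply: d_A2.
- by move=> a; apply: P_L; apply: HL; apply: d_A3.
- by move=> i a b; apply: P_L; apply: HL; apply: d_K.
- by move=> a b _ H1 _ H2; exact: P_mp H1 H2.
- by move=> i a _ H; exact: P_nec.
- by move=> t a _ H; exact: P_sub.
Qed.

Lemma fwd phi psi : Pinv (Imp (B psi) (B phi)) -> L (Imp (D (B psi)) (D (B phi))).
Proof.
move=> H.
set r := And psi (B (Neg (B phi))).
have h := H (@Var n) r; rewrite subst_id in h.
set X := And r (Imp (B psi) (B phi)).
have k1 := B_T X.
have k0 : L (Imp X psi) by pt.
have k2 := B_mono k0.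
have k4 := B_T (Neg (B phi)).
have kk : L (Imp (B X) Bot) by use k1; use k2; use k4; pt.
have kD := Dm kk.
have j0 : L (Imp (Neg (Neg (B phi))) (B phi)) by pt.
have j1 := Dm j0.
have j2 := B_4 (Neg (B phi)).
have j3 := B_4 (B (Neg (B phi))).
have j4 := Dk (B psi) (B (B (Neg (B phi)))).
have j5' : L (Imp (And (B psi) (B (B (Neg (B phi))))) (B r)) by have := B_and psi (B (Neg (B phi))) => z; use z; pt.
have j5 := Dm j5'.
use h; use kD; use Db; use j1; use j2; use j3; use j4; use j5; pt.
Qed.

Hypothesis Hsym : forall th, L (Imp th (B (D th))).

Lemma back phi psi : L (Imp (D (B psi)) (D (B phi))) -> L (Imp (B psi) (B phi)).
Proof.
move=> H.
have s1 := Hsym (D (B phi)).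
have s2 := B_mono (D_4 (B phi)).
have s3 : L (Imp (Neg phi) (Neg (D (B phi)))) := Hsym (Neg phi).
have s3' : L (Imp (D (B phi)) phi) by use s3; pt.
have s4 := B_mono s3'.
have s5 := D_T (B psi).
use s1; use s2; use s4; use s5; use H; pt.
Qed.

End Main.


Lemma subst_B1 n m (s : nat -> form n) : subst s (B1 n m) = Imp (s 1) (boxLe m (Or (diaLe m (s 1)) Bot)).
Proof.
change (Imp (s 1) (subst s (boxLe m (Or (diaLe m (Var n 1)) Bot))) = Imp (s 1) (boxLe m (Or (diaLe m (s 1)) Bot))).
rewrite subst_boxLe (_ : subst s (Or _ _) = Or (subst s (diaLe m (Var n 1))) Bot) //.
by rewrite subst_diaLe.
Qed.

Lemma deriv_idem n (G : form n -> Prop) : normal_logic (deriv G).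
Proof.
move=> a; elim=> {a}.
- by [].
- by move=> *; apply: d_A1.
- by move=> *; apply: d_A2.
- by move=> *; apply: d_A3.
- by move=> *; apply: d_K.
- by move=> a b _ H1 _ H2; exact: d_MP H1 H2.
- by move=> i a _ H; exact: d_Nec.
- by move=> s a _ H; exact: d_Sub.
Qed.

Theorem theorem3p6 (n : nat) (L : form n -> Prop) (m : nat) :
  normal_logic L -> least_pretrans L m ->
  forall phi psi : form n,
    L1_prov L m (Imp (boxLe m psi) (boxLe m phi)) <->
    L (Imp (diaLe m (boxLe m psi)) (diaLe m (boxLe m phi))).
Proof.
move=> HL [Hpt _] phi psi; split.
- move=> H; exact: (fwd HL Hpt (L1_inv HL Hpt H)).
- move=> H.
  pose G := fun b => L b \/ b = B1 n m.
  have HL1 : normal_logic (deriv G) := @deriv_idem n G.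
  have Hpt1 : pretrans_at (deriv G) m by apply: d_hyp; left.
  have Hsym : forall th, deriv G (Imp th (boxLe m (diaLe m th))).
    move=> th.
    have h : deriv G (subst (fun _ => th) (B1 n m)) by apply: d_Sub; apply: d_hyp; right.
    rewrite subst_B1 in h.
    have k : deriv G (Imp (Or (diaLe m th) Bot) (diaLe m th)) by ptauto HL1.
    exact: (Lsyl HL1 h (B_mono HL1 m k)).
  have H1 : deriv G (Imp (diaLe m (boxLe m psi)) (diaLe m (boxLe m phi))) by apply: d_hyp; left.
  exact: (back HL1 Hpt1 Hsym H1).
Qed.
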